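(* Let $\hat x=(\dots,x_2,x_1)\in\mathrm{Im}(\Psi^+)$ satisfy $x_m\le p_m$ for all $m\ge1$, and let $k\ge1$. The following are equivalent: (1) $c_{k+2l}x_k-c_{k+2l-1}x_{k+1}\ge0$ for all $l\ge1$; (2) $\gamma_kx_k-x_{k+1}\ge0$.
   Context: Let $a_1,a_2\in\mathbb Z_{\ge1}$ with $a_1a_2>4$, $A=\begin{pmatrix}2&-a_1\\-a_2&2\end{pmatrix}$, $\mathfrak g=\mathfrak g(A)$ with simple roots $\alpha_1,\alpha_2$, coroots $\alpha_i^\vee$ ($\langle\alpha_2,\alpha_1^\vee\rangle=-a_1$, $\langle\alpha_1,\alpha_2^\vee\rangle=-a_2$), fundamental weights $\Lambda_1,\Lambda_2$. For $k\in\mathbb Z$, $i_k=1$ if $k$ odd, $i_k=2$ if $k$ even. $\mathbb Z^{+\infty}_{\ge0}$ is the set of sequences $(\dots,x_2,x_1)$ of nonnegative integers, almost all zero, with the Nakashima–Zelevinsky crystal structure for the sequence $(\dots,i_2,i_1)$, and $\Psi^+:\mathcal B(\infty)\hookrightarrow\mathbb Z^{+\infty}_{\ge0}$ the corresponding crystal embedding of the crystal basis of $U_q^-(\mathfrak g)$ (sending the highest element to the zero sequence). Put $\alpha=\frac{a_1a_2+\sqrt{a_1^2a_2^2-4a_1a_2}}{2a_2}$, $\beta=\frac{a_1a_2+\sqrt{a_1^2a_2^2-4a_1a_2}}{2a_1}$, $\gamma_k=\alpha$ ($k$ even), $\beta$ ($k$ odd). Fix $\lambda=k_1\Lambda_1-k_2\Lambda_2$,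 $k_1,k_2\in\mathbb Z_{>0}$, with: if $a_1,a_2\ge2$, $k_2\le k_1<(a_1-1)k_2$ or $k_1<k_2\le(a_2-1)k_1$; if $a_1=1$, $2k_1\le k_2\le(a_2-2)k_1$; if $a_2=1$, $2k_2\le k_1\le(a_1-2)k_2$. Let $p_0=k_2$, $p_1=k_1$, $p_{m+2}=a_2p_{m+1}-p_m$ ($m\ge0$ even), $p_{m+2}=a_1p_{m+1}-p_m$ ($m\ge0$ odd). Define $c_0=0$, $c_1=1$, $c_{j+2}=a_1c_{j+1}-c_j$ ($j$ even), $c_{j+2}=a_2c_{j+1}-c_j$ ($j$ odd). *)

(* Defs.v *)
From HB Require Import structures.
From mathcomp Require Import all_boot all_order all_algebra.
Set Implicit Arguments. Unset Strict Implicit. Unset Printing Implicit Defensive.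
Import Order.TTheory GRing.Theory Num.Theory.
Local Open Scope ring_scope.

Definition ik (k : nat) : nat := if odd k then 1%N else 2%N.

(* <h_i, alpha_j> = A_{ij} for A = [[2, -a1], [-a2, 2]] (indices i,j in {1,2}). *)
Definition cartan (a1 a2 : nat) (i j : nat) : int :=
  if i == j then 2 else if i == 1%N then - (a1%:Z) else - (a2%:Z).

(* An element of Z^{+infty}_{>=0} is represented by a finite list
   [:: x_1; x_2; ...; x_n] (all further entries being 0). *)
Definition xk (x : seq nat) (k : nat) : nat := nth 0%N x k.-1.

Definition nz_sigma (a1 a2 : nat) (x : seq nat) (k : nat) : int :=
  (xk x k)%:Z + \sum_(k.+1 <= j < (size x).+1) cartan a1 a2 (ik k) (ik j) * (xk x j)%:Z.

(* sigma^{(i)}(x) = max_{k : i_k = i} sigma_k(x); sigma_k(x) = 0 for k > size x,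
   and such k with i_k = i exist, hence the max with 0. *)
Definition nz_sigmamax (a1 a2 : nat) (x : seq nat) (i : nat) : int :=
  foldr Num.max 0 [seq nz_sigma a1 a2 x k | k <- iota 1 (size x) & ik k == i].

(* m_f = min { k : i_k = i, sigma_k(x) = sigma^{(i)}(x) }; it is <= size x + 2. *)
Definition nz_mf (a1 a2 : nat) (x : seq nat) (i : nat) : nat :=
  let s := iota 1 (size x).+2 in
  nth 0%N s (find (fun k => (ik k == i) && (nz_sigma a1 a2 x k == nz_sigmamax a1 a2 x i)) s).

Definition nz_ftilde (a1 a2 : nat) (i : nat) (x : seq nat) : seq nat :=
  let m := nz_mf a1 a2 x i in set_nth 0%N x m.-1 (xk x m).+1.

(* Im(Psi^+): the subcrystal generated by the zero sequence under the f~_i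
   (B(infty) is generated by u_infty under the f~_i, and Psi^+ is a strict
   crystal embedding with Psi^+(u_infty) = 0). *)
Definition in_Im_Psi (a1 a2 : nat) (x : nat -> nat) : Prop :=
  exists w : seq nat, all (fun i => (i == 1%N) || (i == 2%N)) w /\
    forall m, (0 < m)%N -> x m = xk (foldr (nz_ftilde a1 a2) [::] w) m.

(* (p_m, p_{m+1}) with p_0 = k2, p_1 = k1,
   p_{m+2} = a2 p_{m+1} - p_m (m even), a1 p_{m+1} - p_m (m odd). *)
Fixpoint ppair (a1 a2 k1 k2 : nat) (m : nat) : int * int :=
  match m with
  | 0 => (k2%:Z, k1%:Z)
  | m'.+1 => let uv := ppair a1 a2 k1 k2 m' in
             (uv.2, (if odd m' then a1%:Z else a2%:Z) * uv.2 - uv.1)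
  end.
Definition pseq (a1 a2 k1 k2 : nat) (m : nat) : int := (ppair a1 a2 k1 k2 m).1.

(* c_0 = 0, c_1 = 1, c_{j+2} = a1 c_{j+1} - c_j (j even), a2 c_{j+1} - c_j (j odd). *)
Fixpoint cpair (a1 a2 : nat) (j : nat) : int * int :=
  match j with
  | 0 => (0, 1)
  | j'.+1 => let uv := cpair a1 a2 j' in
             (uv.2, (if odd j' then a2%:Z else a1%:Z) * uv.2 - uv.1)
  end.
Definition cseq (a1 a2 : nat) (j : nat) : int := (cpair a1 a2 j).1.

Definition alpha (R : rcfType) (a1 a2 : nat) : R :=
  ((a1 * a2)%:R + Num.sqrt ((a1 * a2)%:R ^+ 2 - 4 * (a1 * a2)%:R)) / (2 * a2%:R).
Definition beta (R : rcfType) (a1 a2 : nat) : R :=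
  ((a1 * a2)%:R + Num.sqrt ((a1 * a2)%:R ^+ 2 - 4 * (a1 * a2)%:R)) / (2 * a1%:R).
Definition gamma (R : rcfType) (a1 a2 : nat) (k : nat) : R :=
  if odd k then beta R a1 a2 else alpha R a1 a2.

(* Main.v *)
Require Import Defs.
From HB Require Import structures.
From mathcomp Require Import all_boot all_order all_algebra.
From mathcomp Require Import lra ring.
Import Order.TTheory GRing.Theory Num.Theory.
Local Open Scope ring_scope.

Lemma cseqS a1 a2 j : cseq a1 a2 j.+2 =
  (if odd j then a2%:Z else a1%:Z) * cseq a1 a2 j.+1 - cseq a1 a2 j.
Proof. by rewrite /cseq /=. Qed.

Lemma gammaS2 (R : rcfType) a1 a2 j : gamma R a1 a2 j.+2 = gamma R a1 a2 j.
Proof. by rewrite /gamma /= negbK. Qed.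

Lemma gamma2l (R : rcfType) a1 a2 j l : gamma R a1 a2 (j + 2 * l) = gamma R a1 a2 j.
Proof. by rewrite /gamma oddD oddM /= addbF. Qed.

Lemma key_id (R : rcfType) (b r r' c1 c0 : R) :
  (b - r) * r' = 1 -> (b * c1 - c0 - r * c1) * r' = c1 - r' * c0.
Proof.
move=> h; transitivity ((b - r) * r' * c1 - r' * c0); first by ring.
by rewrite h mul1r.
Qed.

Lemma dbound (R : rcfType) (a b n p q : nat) (s : R) :
  (1 <= a)%N -> n = (a * b)%N -> 0 <= s ->
  s ^+ 2 = n%:R ^+ 2 - 4 * n%:R ->
  0 < p%:R - (n%:R + s) / (2 * a%:R) * q%:R ->
  1 <= (p%:R - (n%:R + s) / (2 * a%:R) * q%:R) * a%:R * p%:R.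
Proof.
move=> ha hn hs hs2.
set r := (n%:R + s) / (2 * a%:R).
set r' := (n%:R - s) / (2 * a%:R).
set P : R := p%:R; set Q : R := q%:R; set A : R := a%:R.
move=> hd.
have hA : 0 < A by rewrite /A ltr0n.
have hA0 : A != 0 by rewrite gt_eqF.
have hn0 : 0 <= (n%:R : R) by [].
have hsn : s <= n%:R by nra.
have hr' : 0 <= r' by rewrite /r' divr_ge0 // ?subr_ge0 // mulr_ge0.
have hrr : r' <= r by rewrite /r /r' ler_pM2r ?invr_gt0 ?mulr_gt0 //; lra.
have hQ : 0 <= Q by rewrite /Q.
have hP : 0 <= P by rewrite /P.
have hN : A * (P - r * Q) * (P - r' * Q) =
   (a * p ^ 2 + b * q ^ 2)%:R - (n * p * q)%:R.
  apply/eqP; rewrite -subr_eq0; apply/eqP.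
  rewrite !natrD !natrM hn natrM -/P -/Q -/A.
  rewrite hn natrM -/A in hs2.
  have -> : A * (P - r * Q) * (P - r' * Q) -
      (A * (P * P) + (b%:R : R) * (Q * Q) - A * b%:R * P * Q) =
      ((A * (b%:R : R)) ^+ 2 - 4 * (A * b%:R) - s ^+ 2) * Q ^+ 2 / (4 * A).
    rewrite /r /r' hn natrM -/A; field.
    exact: hA0.
  by rewrite hs2 subrr !mul0r.
have hpos : 0 < A * (P - r * Q) * (P - r' * Q).
  apply: mulr_gt0; first exact: mulr_gt0.
  have : r' * Q <= r * Q by apply: ler_wpM2r.
  lra.
move: hpos; rewrite hN subr_gt0 ltr_nat => hlt.
have h1 : 1 <= A * (P - r * Q) * (P - r' * Q).
  rewrite hN; have : (n * p * q + 1 <= a * p ^ 2 + b * q ^ 2)%N by rewrite addn1.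
  rewrite -(ler_nat R) natrD; lra.
have h2 : 0 <= (P - r * Q) * A * (r' * Q).
  by apply: mulr_ge0; [apply: mulr_ge0; lra | apply: mulr_ge0].
have -> : (P - r * Q) * A * P =
   A * (P - r * Q) * (P - r' * Q) + (P - r * Q) * A * (r' * Q) by ring.
lra.
Qed.

Section Seq.
Variable R : rcfType.
Variables a1 a2 : nat.
Hypothesis ha1 : (1 <= a1)%N.
Hypothesis ha2 : (1 <= a2)%N.
Hypothesis ha : (4 < a1 * a2)%N.

Let s : R := Num.sqrt ((a1 * a2)%:R ^+ 2 - 4 * (a1 * a2)%:R).
Let A1 : R := a1%:R.
Let A2 : R := a2%:R.

Lemma n_ge5 : 5 <= A1 * A2.
Proof. by rewrite /A1 /A2 -natrM (ler_nat R). Qed.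

Lemma s_ge0 : 0 <= s.
Proof. exact: sqrtr_ge0. Qed.

Lemma s_sq : s ^+ 2 = (A1 * A2) ^+ 2 - 4 * (A1 * A2).
Proof.
rewrite /s sqr_sqrtr natrM -/A1 -/A2 //.
have := n_ge5; set n := A1 * A2 => h; nra.
Qed.

Lemma s_ge1 : 1 <= s.
Proof. have := s_sq; have := s_ge0; have := n_ge5; nra. Qed.

Lemma alphaE : alpha R a1 a2 = (A1 * A2 + s) / (2 * A2).
Proof. by rewrite /alpha {1}natrM. Qed.
Lemma betaE : beta R a1 a2 = (A1 * A2 + s) / (2 * A1).
Proof. by rewrite /beta {1}natrM. Qed.

Lemma A1_gt0 : 0 < A1. Proof. by rewrite /A1 ltr0n. Qed.
Lemma A2_gt0 : 0 < A2. Proof. by rewrite /A2 ltr0n. Qed.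

Lemma alpha_gt0 : 0 < alpha R a1 a2.
Proof.
rewrite alphaE divr_gt0 //; last by rewrite mulr_gt0 // A2_gt0.
have := s_ge0; have := n_ge5; lra.
Qed.
Lemma beta_gt0 : 0 < beta R a1 a2.
Proof.
rewrite betaE divr_gt0 //; last by rewrite mulr_gt0 // A1_gt0.
have := s_ge0; have := n_ge5; lra.
Qed.

Lemma id1 : (A1 - alpha R a1 a2) * beta R a1 a2 = 1.
Proof.
apply/eqP; rewrite -subr_eq0; apply/eqP.
have h1 := A1_gt0; have h2 := A2_gt0.
have -> : (A1 - alpha R a1 a2) * beta R a1 a2 - 1 =
   ((A1 * A2) ^+ 2 - 4 * (A1 * A2) - s ^+ 2) / (4 * A1 * A2).
  rewrite alphaE betaE; field.
  by apply/andP; split; apply/eqP; lra.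
by rewrite s_sq subrr mul0r.
Qed.

Lemma id2 : (A2 - beta R a1 a2) * alpha R a1 a2 = 1.
Proof.
apply/eqP; rewrite -subr_eq0; apply/eqP.
have h1 := A1_gt0; have h2 := A2_gt0.
have -> : (A2 - beta R a1 a2) * alpha R a1 a2 - 1 =
   ((A1 * A2) ^+ 2 - 4 * (A1 * A2) - s ^+ 2) / (4 * A1 * A2).
  rewrite alphaE betaE; field.
  by apply/andP; split; apply/eqP; lra.
by rewrite s_sq subrr mul0r.
Qed.

Lemma mu_ge2 : 2 <= alpha R a1 a2 * beta R a1 a2.
Proof.
have h1 := A1_gt0; have h2 := A2_gt0.
rewrite -subr_ge0.
have -> : alpha R a1 a2 * beta R a1 a2 - 2 =
   ((A1 * A2 + s) ^+ 2 - 8 * (A1 * A2)) / (4 * (A1 * A2)).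
  rewrite alphaE betaE; field.
  by apply/andP; split; apply/eqP; lra.
apply: divr_ge0; last by have := n_ge5; lra.
have := s_sq; have := s_ge1; have := n_ge5; set n := A1 * A2; nra.
Qed.

Definition C (j : nat) : R := (cseq a1 a2 j)%:~R.
Definition rho (j : nat) : R := gamma R a1 a2 j.
Definition E (j : nat) : R := C j.+1 - rho j.+1 * C j.

Lemma rho_gt0 j : 0 < rho j.
Proof. by rewrite /rho /gamma; case: ifP => _; [exact: beta_gt0 | exact: alpha_gt0]. Qed.

Lemma C_rec j : C j.+2 = (if odd j then A2 else A1) * C j.+1 - C j.
Proof.
by rewrite /C cseqS rmorphB rmorphM /=; case: (odd j); rewrite -pmulrn.
Qed.

Lemma E_rec j : E j.+1 * rho j.+1 = E j.
Proof.
rewrite /E C_rec /rho gammaS2 /gamma /=.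
case: (odd j) => /=; apply: key_id; [exact: id2 | exact: id1].
Qed.

Lemma E2 j : E j.+2 * (alpha R a1 a2 * beta R a1 a2) = E j.
Proof.
rewrite -(E_rec j) -(E_rec j.+1) -mulrA; congr (_ * _).
rewrite /rho gammaS2 /gamma /=; case: (odd j) => /=; ring.
Qed.

Lemma El j l : E (j + 2 * l) * (alpha R a1 a2 * beta R a1 a2) ^+ l = E j.
Proof.
elim: l => [|l IH]; first by rewrite muln0 addn0 expr0 mulr1.
by rewrite mulnS addnCA add2n exprS mulrA E2.
Qed.

Lemma C0 : C 0 = 0. Proof. by rewrite /C /cseq /= mulr0z. Qed.
Lemma C1 : C 1 = 1. Proof. by rewrite /C /cseq /= mulr1z. Qed.

Lemma E_gt0 j : 0 < E j.
Proof.
elim: j => [|j IH]; first by rewrite /E C0 C1 mulr0 subr0.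
by rewrite -(E_rec j) pmulr_lgt0 ?rho_gt0 in IH.
Qed.

Lemma C_ge0 j : 0 <= C j.
Proof.
elim: j => [|j IH]; first by rewrite C0.
have -> : C j.+1 = E j + rho j.+1 * C j by rewrite /E; ring.
apply: addr_ge0; first exact: ltW (E_gt0 j).
by apply: mulr_ge0; [exact: ltW (rho_gt0 _) | exact: IH].
Qed.

Lemma C_ge1 j : 1 <= C j.+1.
Proof.
have h : 0 < C j.+1.
  have -> : C j.+1 = E j + rho j.+1 * C j by rewrite /E; ring.
  apply: ltr_wpDr; last exact: E_gt0.
  by apply: mulr_ge0; [exact: ltW (rho_gt0 _) | exact: C_ge0].
by move: h; rewrite /C ltr0z ler1z.
Qed.

End Seq.

Lemma pow_gt (R : rcfType) (m : R) l : 2 <= m -> l%:R < m ^+ l.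
Proof.
move=> hm; elim: l => [|l IH]; first by rewrite expr0 ltr01.
have h1 : 1 <= m ^+ l by apply: exprn_ege1; lra.
rewrite exprS -natr1.
have : m ^+ l * 2 <= m * m ^+ l by rewrite mulrC; apply: ler_wpM2r; lra.
lra.
Qed.

Theorem proposition4p5 (R : rcfType) (a1 a2 k1 k2 : nat)
  (ha1 : (1 <= a1)%N) (ha2 : (1 <= a2)%N) (ha : (4 < a1 * a2)%N)
  (hk1 : (0 < k1)%N) (hk2 : (0 < k2)%N)
  (hlam2 : (2 <= a1)%N -> (2 <= a2)%N ->
      ((k2 <= k1)%N && (k1 < (a1 - 1) * k2)%N) \/ ((k1 < k2)%N && (k2 <= (a2 - 1) * k1)%N))
  (hlam1 : a1 = 1%N -> (2 * k1 <= k2)%N && (k2 <= (a2 - 2) * k1)%N)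
  (hlam3 : a2 = 1%N -> (2 * k2 <= k1)%N && (k1 <= (a1 - 2) * k2)%N)
  (x : nat -> nat) (hx : in_Im_Psi a1 a2 x)
  (hxp : forall m, (1 <= m)%N -> (x m)%:Z <= pseq a1 a2 k1 k2 m)
  (k : nat) (hk : (1 <= k)%N) :
  (forall l, (1 <= l)%N ->
      0 <= cseq a1 a2 (k + 2 * l) * (x k)%:Z - cseq a1 a2 (k + 2 * l - 1) * (x k.+1)%:Z)
  <-> 0 <= gamma R a1 a2 k * (x k)%:R - (x k.+1)%:R.
Proof.
case: k hk => [//|k] _.
set Q : R := (x k.+1)%:R; set P : R := (x k.+2)%:R.
set r := gamma R a1 a2 k.+1.
have hQ : 0 <= Q by rewrite /Q.
have hP : 0 <= P by rewrite /P.
have hr : 0 < r by exact: (rho_gt0 R a1 a2 ha1 ha2 ha k.+1).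
have HE l : E R a1 a2 (k + 2 * l) = C R a1 a2 (k + 2 * l).+1 - r * C R a1 a2 (k + 2 * l).
  by rewrite /E /rho -addSn gamma2l.
have Hterm l : (0 <= cseq a1 a2 (k.+1 + 2 * l) * (x k.+1)%:Z
                    - cseq a1 a2 (k.+1 + 2 * l - 1) * (x k.+2)%:Z) =
   (0 <= E R a1 a2 (k + 2 * l) * Q - C R a1 a2 (k + 2 * l) * (P - r * Q)).
  rewrite -(ler0z R) rmorphB !rmorphM /= -!pmulrn addSn subn1 /= HE.
  congr (0 <= _); rewrite /C /Q /P; ring.
split.
- move=> H; rewrite leNgt; apply/negP => hlt.
  have hd : 0 < P - r * Q by lra.
  pose a := if odd k.+1 then a1 else a2.
  have hdb : 1 <= (P - r * Q) * a%:R * P.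
    have hsq : 0 <= (a1 * a2)%:R ^+ 2 - 4 * ((a1 * a2)%:R : R).
      have : (5 : R) <= (a1 * a2)%:R by rewrite (ler_nat R).
      set N : R := (a1 * a2)%:R; nra.
    move: hd; rewrite /r /a /gamma /alpha /beta; case: (odd k.+1).
      apply: (dbound _ a1 a2 (a1 * a2)) => //; first exact: sqrtr_ge0.
      by rewrite sqr_sqrtr.
    apply: (dbound _ a2 a1 (a1 * a2)) => //; first exact: mulnC.
      exact: sqrtr_ge0.
    by rewrite sqr_sqrtr.
  have hA : 0 < (a%:R : R) by rewrite /a; case: (odd k.+1); rewrite ltr0n.
  clearbody a.
  have hPpos : 0 < P.
    rewrite lt0r hP andbT; apply/negP => /eqP h0. by rewrite h0 mulr0 ler10 in hdb.
  set Nk := `|cseq a1 a2 k.+1|%N.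
  have hCk : C R a1 a2 k.+1 = Nk%:R.
    have h0 : (0 <= cseq a1 a2 k.+1).
      by rewrite -(ler0z R); exact: (C_ge0 R a1 a2 ha1 ha2 ha).
    by rewrite /C /Nk -{1}(gez0_abs h0) -pmulrn.
  have hEk : E R a1 a2 k <= Nk%:R.
    rewrite /E -hCk lerBlDr lerDl; apply: mulr_ge0.
      exact: ltW (rho_gt0 R a1 a2 ha1 ha2 ha _).
    exact: (C_ge0 R a1 a2 ha1 ha2 ha).
  set M := (Nk * x k.+1 * a * x k.+2)%N.
  have := H M.+1 isT; rewrite Hterm.
  have hc : 1 <= C R a1 a2 (k + 2 * M.+1).
    by rewrite mulnS addnCA add2n; exact: C_ge1.
  have hEl := El R a1 a2 ha1 ha2 ha k M.+1.
  have hm := @pow_gt R _ M.+1 (mu_ge2 R a1 a2 ha1 ha2 ha).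
  have he := E_gt0 R a1 a2 ha1 ha2 ha (k + 2 * M.+1).
  set e := E R a1 a2 (k + 2 * M.+1) in hEl he *.
  set c := C R a1 a2 (k + 2 * M.+1) in hc *.
  set m := (alpha R a1 a2 * beta R a1 a2) ^+ M.+1 in hEl hm *.
  set A : R := a%:R in hA hdb *.
  set d := P - r * Q in hd hdb *.
  have hm0 : 0 < m by apply: le_lt_trans hm.
  have hQAP : 0 <= Q * A * P by apply: mulr_ge0 => //; apply: mulr_ge0; lra.
  have s1 : e * Q * (m * A * P) = E R a1 a2 k * (Q * A * P) by rewrite -hEl; ring.
  have s2 : E R a1 a2 k * (Q * A * P) <= Nk%:R * (Q * A * P) by apply: ler_wpM2r.
  have s3 : Nk%:R * (Q * A * P) = M%:R by rewrite /M !natrM /Q /A /P; ring.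
  have s4 : (M%:R : R) < M.+1%:R by rewrite ltr_nat.
  have s5 : m <= m * (d * A * P) by apply: ler_peMr => //; lra.
  have s6 : m * (d * A * P) <= c * d * (m * A * P).
    have -> : c * d * (m * A * P) = m * (d * A * P) * c by ring.
    apply: ler_peMr => //; apply: mulr_ge0; lra.
  have hlt2 : e * Q * (m * A * P) < c * d * (m * A * P) by lra.
  rewrite ltr_pM2r in hlt2; last by apply: mulr_gt0 => //; apply: mulr_gt0.
  lra.
- move=> H l hl; rewrite Hterm.
  have := E_gt0 R a1 a2 ha1 ha2 ha (k + 2 * l).
  have := C_ge0 R a1 a2 ha1 ha2 ha (k + 2 * l).
  move=> h1 h2.
  have : 0 <= E R a1 a2 (k + 2 * l) * Q by apply: mulr_ge0; lra.
  have : C R a1 a2 (k + 2 * l) * (P - r * Q) <= 0.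
    by apply: mulr_ge0_le0; lra.
  lra.
Qed.
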